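(* Let $N\ge2$, $\sigma=(\sigma_1,\dots,\sigma_N)'$ with $\sigma_i>0$. Let $R$ be the $(N-1)\times(N-1)$ tridiagonal matrix with $R_{ii}=1$, $R_{i,i+1}=R_{i+1,i}=-1/2$ (other entries $0$), let $A$ be the $(N-1)\times(N-1)$ tridiagonal matrix with $A_{ii}=\sigma_i^2+\sigma_{i+1}^2$, $A_{i,i+1}=A_{i+1,i}=-\sigma_{i+1}^2$ (other entries $0$), and let $\rho_{kl}$ denote the entries of $R^{-1}$. For $1\le k\le l\le N-1$ set $$c_{k,l}(\sigma)=\mathrm{tr}(R^{-1}A)-2\frac{(R^{-1}AR^{-1})_{kl}}{\rho_{kl}}.$$ Then: (i) $c_{k,l}(\sigma)\ge0$ for $2\le k\le l\le N-2$; (ii) $c_{1,l}(\sigma)=c_l(\sigma)$ for $1\le l\le N-1$; (iii) $c_{k,N-1}(\sigma)=c_{N-k}(\sigma^{\leftarrow})$ for $1\le k\le N-1$.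
   Context: For $\alpha=(\alpha_1,\dots,\alpha_M)'\in\mathbb{R}^M$ ($M\ge2$) and $l=1,\dots,M-1$: $c_l(\alpha)=-\frac{2(M-1)}{M}\alpha_1^2+\frac{2(M+1)}{M}\sum_{p=2}^l\alpha_p^2+\frac{2(M-1)(M-l)-4l}{(M-l)M}\sum_{p=l+1}^M\alpha_p^2$, and $\alpha^{\leftarrow}=(\alpha_M,\dots,\alpha_1)'$. Here $M=N$. (All entries $\rho_{kl}$ of $R^{-1}$ are positive.) *)

(* Defs.v *)
From mathcomp Require Import all_boot all_order all_algebra.
Set Implicit Arguments. Unset Strict Implicit. Unset Printing Implicit Defensive.
Import Order.TTheory GRing.Theory Num.Theory.
Local Open Scope ring_scope.

Section Defs.
Variable R : realFieldType.

(* 1-based access to a vector: at1 s k = s_k for 1 <= k <= N, 0 otherwise *)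
Definition at1 (N : nat) (s : 'I_N -> R) (k : nat) : R :=
  oapp s 0 (insub k.-1).

(* 1-based access to a matrix entry: mxat M k l = M_{kl}, 0 out of range *)
Definition mxat (n : nat) (M : 'M[R]_n) (k l : nat) : R :=
  match insub k.-1, insub l.-1 with
  | Some i, Some j => M i j
  | _, _ => 0
  end.

Definition Rmat (n : nat) : 'M[R]_n :=
  \matrix_(i, j) (if i == j then 1
                  else if ((i : nat).+1 == j) || ((j : nat).+1 == i) then - (1 / 2%:R)
                  else 0).

(* A : (N-1) x (N-1); paper (1-based) A_ii = s_i^2 + s_(i+1)^2,
   A_(i,i+1) = A_(i+1,i) = - s_(i+1)^2 . With 0-based i,j the 1-based
   indices are i+1, j+1. *)
Definition Amat (N : nat) (s : 'I_N -> R) : 'M[R]_(N.-1) :=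
  \matrix_(i, j) (if i == j then at1 s (i : nat).+1 ^+ 2 + at1 s (i : nat).+2 ^+ 2
                  else if ((i : nat).+1 == j) || ((j : nat).+1 == i)
                  then - at1 s (maxn i j).+1 ^+ 2
                  else 0).

Definition ckl (N : nat) (s : 'I_N -> R) (k l : nat) : R :=
  let Ri := invmx (Rmat N.-1) in
  \tr (Ri *m Amat s) - 2%:R * mxat (Ri *m Amat s *m Ri) k l / mxat Ri k l.

Definition cl (M : nat) (a : 'I_M -> R) (l : nat) : R :=
  - (2%:R * (M%:R - 1) / M%:R) * at1 a 1 ^+ 2
  + (2%:R * (M%:R + 1) / M%:R) * \sum_(2 <= p < l.+1) at1 a p ^+ 2
  + ((2%:R * (M%:R - 1) * (M - l)%:R - 4%:R * l%:R) / ((M - l)%:R * M%:R))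
      * \sum_(l.+1 <= p < M.+1) at1 a p ^+ 2.

Definition revv (M : nat) (a : 'I_M -> R) : 'I_M -> R := fun i => a (rev_ord i).

End Defs.

(* Main.v *)
Require Import Defs.
From mathcomp Require Import all_boot all_order all_algebra.
From mathcomp Require Import zify ring lra.
Import Order.TTheory GRing.Theory Num.Theory.
Local Open Scope ring_scope.

Lemma sum_delta1 (R : realFieldType) (p : nat) (F : nat -> R) (c : nat) :
  F 0%N = 0 -> (forall c, (p < c)%N -> F c = 0) ->
  \sum_(m < p) (((m : nat).+1 == c)%:R * F (m : nat).+1) = F c.
Proof.
move=> F0 Fp; case: c => [|c].
  by rewrite F0 big1 // => i _; rewrite mul0r.
case: (ltnP c p) => hc.
  rewrite (bigD1 (Ordinal hc)) //= eqxx mul1r big1 ?addr0 // => i hi.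
  rewrite eqSS; case: eqP => [e|]; last by rewrite mul0r.
  by exfalso; move/eqP: hi; apply; apply: val_inj.
rewrite Fp ?ltnS // big1 // => i _; rewrite eqSS.
by case: eqP => [e|]; [move: (ltn_ord i); rewrite e ltnNge hc | rewrite mul0r].
Qed.

Lemma Rmat_entry (R : realFieldType) p (i m : 'I_p) :
  Rmat R p i m = ((m : nat).+1 == (i : nat).+1)%:R - 2%:R^-1 * ((m : nat).+1 == (i : nat).+2)%:R
     - 2%:R^-1 * ((m : nat).+1 == i)%:R.
Proof.
rewrite mxE !eqSS.
have -> : (i == m) = ((i : nat) == m) by [].
move: (i : nat) (m : nat) => a b.
rewrite (eq_sym b a) (eq_sym b a.+1).
case: (a =P b) => E1; case: (a.+1 =P b) => E2; case: (b.+1 =P a) => E3 /=;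
  try (exfalso; lia); rewrite ?mulr0 ?mulr1 ?subr0 ?sub0r; try field.
all: done.
Qed.

Lemma nat_rec3 (N i b : nat) : (1 <= b)%N -> (b < N)%N -> (i.+2 <= N)%N ->
 (4 * (minn i.+1 b * (N - maxn i.+1 b)) = 2 * (minn i.+2 b * (N - maxn i.+2 b)) + 2 * (minn i b * (N - maxn i b)) + 2 * N * (i.+1 == b))%N.
Proof.
move=> h1 h2 h3.
case: (ltngtP i.+1 b) => h.
- have e1: minn i.+1 b = i.+1 by lia.
  have e2: maxn i.+1 b = b by lia.
  have e3: minn i.+2 b = i.+2 by lia.
  have e4: maxn i.+2 b = b by lia.
  have e5: minn i b = i by lia.
  have e6: maxn i b = b by lia.
  have e7: (i.+1 == b) = false by lia.
  rewrite ?e1 ?e2 ?e3 ?e4 ?e5 ?e6 ?e7. nia.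
- have e1: minn i.+1 b = b by lia.
  have e2: maxn i.+1 b = i.+1 by lia.
  have e3: minn i.+2 b = b by lia.
  have e4: maxn i.+2 b = i.+2 by lia.
  have e5: minn i b = b by lia.
  have e6: maxn i b = i by lia.
  have e7: (i.+1 == b) = false by lia.
  rewrite ?e1 ?e2 ?e3 ?e4 ?e5 ?e6 ?e7. nia.
- subst b.
  have e3: minn i.+2 i.+1 = i.+1 by lia.
  have e4: maxn i.+2 i.+1 = i.+2 by lia.
  have e5: minn i i.+1 = i by lia.
  have e6: maxn i i.+1 = i.+1 by lia.
  rewrite ?minnn ?maxnn ?e3 ?e4 ?e5 ?e6 ?eqxx. nia.
Qed.

Lemma aux1 (R : realFieldType) (x y z d n : R) : n != 0 ->
  4%:R * x = 2%:R * y + 2%:R * z + 2%:R * n * d ->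
  2%:R * x / n - 2%:R^-1 * (2%:R * y / n) - 2%:R^-1 * (2%:R * z / n) = d.
Proof.
move=> hn H; have -> : x = (2%:R * y + 2%:R * z + 2%:R * n * d) / 4%:R.
  by rewrite -H; field.
by field.
Qed.

Definition rho (R : realFieldType) (N k l : nat) : R :=
  (2 * (minn k l * (N - maxn k l)))%:R / N%:R.

Lemma rho_sym (R : realFieldType) N k l : rho R N k l = rho R N l k.
Proof. by rewrite /rho minnC maxnC. Qed.

Lemma rho0 (R : realFieldType) N l : rho R N 0 l = 0.
Proof. by rewrite /rho min0n muln0 mul0r. Qed.

Lemma rhoN (R : realFieldType) N k l : (N <= k)%N -> rho R N k l = 0.
Proof.
move=> h; rewrite /rho; have -> : (N - maxn k l = 0)%N by lia.
by rewrite muln0 muln0 mul0r.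
Qed.

Lemma Nnz (R : realFieldType) (p : nat) : (p.+1)%:R != 0 :> R.
Proof. by rewrite pnatr_eq0. Qed.

Lemma rho_rec (R : realFieldType) (p i j : nat) : (i < p)%N -> (j < p)%N ->
  rho R p.+1 i.+1 j.+1 - 2%:R^-1 * rho R p.+1 i.+2 j.+1 - 2%:R^-1 * rho R p.+1 i j.+1
  = (i == j)%:R.
Proof.
move=> hi hj; rewrite /rho !natrM; apply: aux1; first exact: Nnz.
have := @nat_rec3 p.+1 i j.+1 isT hj hi.
move=> H; rewrite -!natrM -!natrD; congr (_%:R); rewrite H /=; lia.
Qed.

Definition Gm (R : realFieldType) p : 'M[R]_p := \matrix_(i, j) rho R p.+1 (i : nat).+1 (j : nat).+1.

Lemma RG (R : realFieldType) p : Rmat R p *m Gm R p = 1%:M.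
Proof.
apply/matrixP => i j; rewrite !mxE.
pose F x := rho R p.+1 x (j : nat).+1.
have -> : \sum_m Rmat R p i m * Gm R p m j =
   \sum_(m < p) (((m : nat).+1 == (i : nat).+1)%:R * F (m : nat).+1)
   - 2%:R^-1 * \sum_(m < p) (((m : nat).+1 == (i : nat).+2)%:R * F (m : nat).+1)
   - 2%:R^-1 * \sum_(m < p) (((m : nat).+1 == i)%:R * F (m : nat).+1).
  rewrite !mulr_sumr -!sumrB; apply: eq_bigr => m _.
  by rewrite Rmat_entry mxE /F; ring.
have F0 : F 0%N = 0 by rewrite /F rho0.
have Fp : forall c, (p < c)%N -> F c = 0 by move=> c hc; rewrite /F rhoN.
rewrite !sum_delta1 // /F rho_rec //.
Qed.

Lemma invR (R : realFieldType) p : invmx (Rmat R p) = Gm R p.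
Proof.
have h := RG R p.
have [u _] := mulmx1_unit h.
by rewrite -[invmx _]mulmx1 -h mulKmx.
Qed.

Lemma Amat_entry (R : realFieldType) p (s : 'I_p.+1 -> R) (a b : 'I_p) :
  Amat s a b = (((a : nat).+1 == (b : nat).+1)%:R * (at1 s (b : nat).+1 ^+ 2 + at1 s (b : nat).+2 ^+ 2)
    - ((a : nat).+1 == b)%:R * at1 s (b : nat).+1 ^+ 2
    - ((a : nat).+1 == (b : nat).+2)%:R * at1 s (b : nat).+2 ^+ 2).
Proof.
rewrite mxE !eqSS.
have -> : (a == b) = ((a : nat) == b) by [].
move: (a : nat) (b : nat) => x y.
rewrite ?(eq_sym y x) (eq_sym x y.+1).
case: (x =P y) => E1; case: (x.+1 =P y) => E2; case: (y.+1 =P x) => E3 /=;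
  try (exfalso; lia).
- by subst y; ring.
- have -> : maxn x y = y by lia.
  ring.
- have -> : maxn x y = x by lia.
  subst x; ring.
- ring.
Qed.

Definition vv (R : realFieldType) (N j k : nat) : R := rho R N k j - rho R N k j.-1.

Lemma GA_entry (R : realFieldType) p (s : 'I_p.+1 -> R) (k b : 'I_p) :
  (Gm R p *m Amat s) k b = at1 s (b : nat).+1 ^+ 2 * vv R p.+1 (b : nat).+1 (k : nat).+1
     - at1 s (b : nat).+2 ^+ 2 * vv R p.+1 (b : nat).+2 (k : nat).+1.
Proof.
rewrite mxE.
pose F x := rho R p.+1 (k : nat).+1 x.
have -> : \sum_j Gm R p k j * Amat s j b =
   (\sum_(m < p) (((m : nat).+1 == (b : nat).+1)%:R * F (m : nat).+1)) * (at1 s (b : nat).+1 ^+ 2 + at1 s (b : nat).+2 ^+ 2)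
   - (\sum_(m < p) (((m : nat).+1 == b)%:R * F (m : nat).+1)) * at1 s (b : nat).+1 ^+ 2
   - (\sum_(m < p) (((m : nat).+1 == (b : nat).+2)%:R * F (m : nat).+1)) * at1 s (b : nat).+2 ^+ 2.
  rewrite !mulr_suml -!sumrB; apply: eq_bigr => m _.
  by rewrite Amat_entry mxE /F; ring.
have F0 : F 0%N = 0 by rewrite /F rho_sym rho0.
have Fp : forall c, (p < c)%N -> F c = 0 by move=> c hc; rewrite /F rho_sym rhoN.
rewrite !sum_delta1 // /F /vv /=; ring.
Qed.

Lemma reindex (R : realFieldType) p (f g : nat -> R) :
  f p.+1 = 0 -> g 1%N = 0 ->
  \sum_(b < p) (f (b : nat).+1 - g (b : nat).+2) = \sum_(j < p.+1) (f (j : nat).+1 - g (j : nat).+1).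
Proof.
move=> hf hg; rewrite !sumrB big_ord_recr big_ord_recl /= hf hg addr0 add0r.
done.
Qed.

Lemma GAG_entry (R : realFieldType) p (s : 'I_p.+1 -> R) (k l : 'I_p) :
  (Gm R p *m Amat s *m Gm R p) k l =
  \sum_(j < p.+1) at1 s (j : nat).+1 ^+ 2 * vv R p.+1 (j : nat).+1 (k : nat).+1 * vv R p.+1 (j : nat).+1 (l : nat).+1.
Proof.
rewrite mxE.
pose f j := at1 s j ^+ 2 * vv R p.+1 j (k : nat).+1 * rho R p.+1 j (l : nat).+1.
pose g j := at1 s j ^+ 2 * vv R p.+1 j (k : nat).+1 * rho R p.+1 j.-1 (l : nat).+1.
have -> : \sum_j (Gm R p *m Amat s) k j * Gm R p j l = \sum_(b < p) (f (b : nat).+1 - g (b : nat).+2).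
  by apply: eq_bigr => b _; rewrite GA_entry mxE /f /g /=; ring.
rewrite reindex; last by rewrite /g rho0 mulr0.
  apply: eq_bigr => j _; rewrite /f /g /= [vv R _ _ (l : nat).+1]/vv (rho_sym _ _ _ j.+1) (rho_sym _ _ _ j).
  by ring.
by rewrite /f rhoN ?mulr0.
Qed.

Lemma trGA (R : realFieldType) p (s : 'I_p.+1 -> R) :
  \tr (Gm R p *m Amat s) =
  \sum_(j < p.+1) at1 s (j : nat).+1 ^+ 2 * (vv R p.+1 (j : nat).+1 (j : nat).+1 - vv R p.+1 (j : nat).+1 j).
Proof.
rewrite /mxtrace.
pose f j := at1 s j ^+ 2 * vv R p.+1 j j.
pose g j := at1 s j ^+ 2 * vv R p.+1 j j.-1.
have -> : \sum_i (Gm R p *m Amat s) i i = \sum_(b < p) (f (b : nat).+1 - g (b : nat).+2).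
  by apply: eq_bigr => b _; rewrite GA_entry /f /g.
rewrite reindex; last by rewrite /g /vv /= !rho0 subrr mulr0.
  by apply: eq_bigr => j _; rewrite /f /g /=; ring.
by rewrite /f /vv !rhoN ?subrr ?mulr0.
Qed.

Lemma vv_le (R : realFieldType) N j k : (1 <= j)%N -> (j <= k)%N -> (k <= N)%N ->
  vv R N j k = (2 * (N - k))%:R / N%:R.
Proof.
move=> h1 h2 h3; rewrite /vv /rho.
have -> : (2 * (minn k j * (N - maxn k j)) = 2 * (minn k j.-1 * (N - maxn k j.-1)) + 2 * (N - k))%N.
  have -> : minn k j = j by lia.
  have -> : maxn k j = k by lia.
  have -> : minn k j.-1 = j.-1 by lia.
  have -> : maxn k j.-1 = k by lia.
  case: j h1 h2 => // j _ _ /=; nia.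
by rewrite natrD mulrDl addrAC subrr add0r.
Qed.

Lemma vv_gt (R : realFieldType) N j k : (k < j)%N -> (j <= N)%N ->
  vv R N j k = - ((2 * k)%:R / N%:R).
Proof.
move=> h1 h2; rewrite /vv /rho.
have -> : (2 * (minn k j.-1 * (N - maxn k j.-1)) = 2 * (minn k j * (N - maxn k j)) + 2 * k)%N.
  have -> : minn k j = k by lia.
  have -> : maxn k j = j by lia.
  have -> : minn k j.-1 = k by lia.
  have -> : maxn k j.-1 = j.-1 by lia.
  case: j h1 h2 => // j _ h /=; nia.
by rewrite natrD mulrDl opprD addrA subrr add0r.
Qed.

Definition cf (R : realFieldType) (N k l j : nat) : R :=
  if (j <= k)%N then 2%:R * (N%:R - 1) / N%:R - 4%:R * (N%:R - k%:R) / (k%:R * N%:R)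
  else if (j <= l)%N then 2%:R * (N%:R + 1) / N%:R
  else 2%:R * (N%:R - 1) / N%:R - 4%:R * l%:R / (N%:R * (N%:R - l%:R)).

Lemma coefE (R : realFieldType) N k l j : (1 <= k)%N -> (k <= l)%N -> (l < N)%N ->
  (1 <= j)%N -> (j <= N)%N ->
  (vv R N j j - vv R N j j.-1) - 2%:R * (vv R N j k * vv R N j l) / rho R N k l = cf R N k l j.
Proof.
move=> hk hkl hlN hj hjN.
have hN : N%:R != 0 :> R by rewrite pnatr_eq0; lia.
have hK : k%:R != 0 :> R by rewrite pnatr_eq0; lia.
have hL : N%:R - l%:R != 0 :> R by rewrite -natrB ?pnatr_eq0; lia.
have rkl : rho R N k l = (2 * (k * (N - l)))%:R / N%:R.
  by rewrite /rho (minn_idPl hkl) (maxn_idPr hkl).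
case: j hj hjN => // j _ hjN.
rewrite rkl (@vv_le R N j.+1 j.+1) // (@vv_gt R N j.+1 j) //= /cf.
case: (leqP j.+1 k) => h1.
  rewrite !vv_le //; try lia.
  rewrite !natrM !natrB //; try lia; field.
  by rewrite hN hK hL.
case: (leqP j.+1 l) => h2.
  rewrite vv_gt // vv_le //; try lia.
  rewrite !natrM !natrB //; try lia; field.
  by rewrite hN hK hL.
rewrite !vv_gt //.
rewrite !natrM !natrB //; try lia; field.
by rewrite hN hK hL.
Qed.

Lemma ckl_sum (R : realFieldType) p (s : 'I_p.+1 -> R) (k l : 'I_p) : (k <= l)%N ->
  ckl s (k : nat).+1 (l : nat).+1 =
  \sum_(j < p.+1) at1 s (j : nat).+1 ^+ 2 * cf R p.+1 (k : nat).+1 (l : nat).+1 (j : nat).+1.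
Proof.
move=> hkl.
rewrite /ckl /mxat /= !valK invR trGA GAG_entry mxE.
rewrite mulr_sumr mulr_suml -sumrB; apply: eq_bigr => j _.
rewrite -coefE //=; [by ring | by rewrite ltnS].
Qed.

Definition clc (R : realFieldType) (M l i : nat) : R :=
  if (i <= 1)%N then - (2%:R * (M%:R - 1) / M%:R)
  else if (i <= l)%N then 2%:R * (M%:R + 1) / M%:R
  else (2%:R * (M%:R - 1) * (M - l)%:R - 4%:R * l%:R) / ((M - l)%:R * M%:R).

Lemma cl_sum (R : realFieldType) M (a : 'I_M -> R) l : (1 <= l)%N -> (l < M)%N ->
  cl a l = \sum_(1 <= i < M.+1) at1 a i ^+ 2 * clc R M l i.
Proof.
move=> h1 h2.
rewrite (@big_cat_nat _ _ _ 2) //; last by lia.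
rewrite (@big_cat_nat _ _ _ l.+1 2) //; try lia.
rewrite big_nat1 /=.
rewrite (@eq_big_nat _ _ _ 2 l.+1 _ (fun i => at1 a i ^+ 2 * (2%:R * (M%:R + 1) / M%:R))); last first.
  move=> i hi; rewrite /clc.
  have -> : (i <= 1)%N = false by lia.
  have -> : (i <= l)%N = true by lia.
  done.
rewrite (@eq_big_nat _ _ _ l.+1 M.+1 _ (fun i => at1 a i ^+ 2 *
   ((2%:R * (M%:R - 1) * (M - l)%:R - 4%:R * l%:R) / ((M - l)%:R * M%:R)))); last first.
  move=> i hi; rewrite /clc.
  have -> : (i <= 1)%N = false by lia.
  have -> : (i <= l)%N = false by lia.
  done.
rewrite /cl -!big_distrl /= /clc /=.
ring.
Qed.

Lemma ord_nat (R : realFieldType) M (F : nat -> R) :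
  \sum_(j < M) F (j : nat).+1 = \sum_(1 <= i < M.+1) F i.
Proof. by rewrite big_add1 /= big_mkord. Qed.

Lemma at1_rev (R : realFieldType) M (a : 'I_M -> R) i : (1 <= i)%N -> (i <= M)%N ->
  at1 (revv a) i = at1 a (M.+1 - i).
Proof.
move=> h1 h2; rewrite /at1.
case: insubP => [u _ eu|]; last by lia.
case: insubP => [v _ ev|]; last by lia.
rewrite /= /revv; congr (a _); apply: val_inj => /=.
move: eu ev => /= eu ev; lia.
Qed.

Lemma cf_ge0 (R : realFieldType) N k l j : (2 <= k)%N -> (k <= l)%N -> (l.+2 <= N)%N ->
  0 <= cf R N k l j.
Proof.
move=> hk hkl hlN.
have hN : N%:R != 0 :> R by rewrite pnatr_eq0; lia.
have hK : k%:R != 0 :> R by rewrite pnatr_eq0; lia.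
have hL : N%:R - l%:R != 0 :> R by rewrite -natrB ?pnatr_eq0; lia.
rewrite /cf; case: ifP => _.
  have -> : 2%:R * (N%:R - 1) / N%:R - 4%:R * (N%:R - k%:R) / (k%:R * N%:R)
     = (2 * N * (k - 2) + 2 * k)%:R / (k * N)%:R :> R.
    rewrite !natrD !natrM natrB; last by lia.
    field; by rewrite hN hK.
  by rewrite divr_ge0 ?ler0n.
case: ifP => _.
  have -> : 2%:R * (N%:R + 1) / N%:R = (2 * (N + 1))%:R / N%:R :> R by rewrite natrM natrD.
  by rewrite divr_ge0 ?ler0n.
have -> : 2%:R * (N%:R - 1) / N%:R - 4%:R * l%:R / (N%:R * (N%:R - l%:R))
   = (2 * N * (N - l - 2) + 2 * (N - l))%:R / (N * (N - l))%:R :> R.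
  rewrite !natrD !natrM !natrB; try lia.
  field; by rewrite hN hL.
by rewrite divr_ge0 ?ler0n.
Qed.

Lemma cf_ii (R : realFieldType) N l i : (1 <= l)%N -> (l < N)%N -> (1 <= i)%N -> (i <= N)%N ->
  cf R N 1 l i = clc R N l i.
Proof.
move=> h1 h2 h3 h4.
have hN : N%:R != 0 :> R by rewrite pnatr_eq0; lia.
have hL : N%:R - l%:R != 0 :> R by rewrite -natrB ?pnatr_eq0; lia.
rewrite /cf /clc; case: ifP => _.
  field; by rewrite hN.
case: ifP => _ //.
rewrite natrB; last by lia.
field; by rewrite hN hL.
Qed.

Lemma cf_iii (R : realFieldType) N k i : (1 <= k)%N -> (k < N)%N -> (1 <= i)%N -> (i <= N)%N ->
  cf R N k (N - 1) (N.+1 - i) = clc R N (N - k) i.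
Proof.
move=> h1 h2 h3 h4.
have hN : N%:R != 0 :> R by rewrite pnatr_eq0; lia.
have hK : k%:R != 0 :> R by rewrite pnatr_eq0; lia.
rewrite /cf /clc.
case: (leqP i 1) => hi1.
  have -> : (N.+1 - i <= k)%N = false by lia.
  have -> : (N.+1 - i <= N - 1)%N = false by lia.
  rewrite natrB; last by lia.
  field; rewrite hN /=.
  have -> : N%:R - (N%:R - 1%:R) = 1 :> R by ring.
  by rewrite oner_neq0.
case: (leqP i (N - k)) => hi2.
  have -> : (N.+1 - i <= k)%N = false by lia.
  have -> : (N.+1 - i <= N - 1)%N = true by lia.
  done.
have -> : (N.+1 - i <= k)%N = true by lia.
have -> : (N - (N - k) = k)%N by lia.
rewrite natrB; last by lia.
field; by rewrite hN hK.
Qed.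

Theorem lemma4p6 (R : realFieldType) (N : nat) (sigma : 'I_N -> R) :
  (2 <= N)%N -> (forall i, 0 < sigma i) ->
  [/\ (forall k l : nat, (2 <= k)%N -> (k <= l)%N -> (l <= N - 2)%N ->
         0 <= ckl sigma k l),
      (forall l : nat, (1 <= l)%N -> (l <= N - 1)%N ->
         ckl sigma 1 l = cl sigma l)
    & (forall k : nat, (1 <= k)%N -> (k <= N - 1)%N ->
         ckl sigma k (N - 1) = cl (revv sigma) (N - k))].
Proof.
case: N sigma => [|[|n]] sigma //= _ _; split.
- move=> k l hk hkl hl.
  have hk' : (k.-1 < n.+1)%N by lia.
  have hl' : (l.-1 < n.+1)%N by lia.
  have hkl' : (nat_of_ord (Ordinal hk') <= nat_of_ord (Ordinal hl'))%N by rewrite /=; lia.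
  have E := @ckl_sum R n.+1 sigma (Ordinal hk') (Ordinal hl') hkl'.
  rewrite /= !prednK in E; try lia.
  rewrite E; apply: sumr_ge0 => j _; apply: mulr_ge0; first exact: sqr_ge0.
  apply: cf_ge0; lia.
- move=> l hl hlN.
  have hl' : (l.-1 < n.+1)%N by lia.
  have E := @ckl_sum R n.+1 sigma ord0 (Ordinal hl') isT.
  rewrite /= !prednK in E; try lia.
  rewrite E (@cl_sum R n.+2 sigma l); try lia.
  rewrite (@ord_nat R n.+2 (fun j => at1 sigma j ^+ 2 * cf R n.+2 1 l j)).
  apply: eq_big_nat => i hi; rewrite cf_ii //; lia.
- move=> k hk hkN.
  have hk' : (k.-1 < n.+1)%N by lia.
  have hkl' : (nat_of_ord (Ordinal hk') <= nat_of_ord (@ord_max n))%N by rewrite /=; lia.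
  have E := @ckl_sum R n.+1 sigma (Ordinal hk') ord_max hkl'.
  rewrite /= !prednK in E; try lia.
  have -> : (n.+2 - 1 = n.+1)%N by lia.
  rewrite E (@cl_sum R n.+2 (revv sigma) (n.+2 - k)); try lia.
  rewrite (@ord_nat R n.+2 (fun j => at1 sigma j ^+ 2 * cf R n.+2 k n.+1 j)).
  rewrite big_nat_rev.
  apply: eq_big_nat => i hi.
  rewrite at1_rev; try lia.
  have -> : (1 + n.+3 - i.+1 = n.+3 - i)%N by lia.
  have H := @cf_iii R n.+2 k i.
  have e : (n.+2 - 1 = n.+1)%N by lia.
  rewrite e in H; rewrite H //; lia.
Qed.
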